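(* Let lines in the real projective plane be in bounded general position, with associated graph $G$. Then every edge of $G$ lies on the boundary of at least one alcove.
   Context: Lines in $\mathbb{R}P^2$ are in general position if no three pass through a common point, and in bounded position if all pairwise intersections lie in $\mathbb{R}^2$. The graph $G$ has as vertices the pairwise intersection points of the lines; two vertices are joined by an edge if some line of the arrangement contains both and no third vertex lies between them on that line; the edge is the closed segment joining them. An alcove is a subset $V\subset\mathbb{R}^2$ which is compact, convex and connected, whose boundary is a union of edges of $G$ belonging to distinct lines, and which contains no proper subset with these two properties. *)

(* Defs.v *)
From HB Require Import structures.
From mathcomp Require Import all_boot all_order all_algebra.
From mathcomp Require Import all_classical all_reals all_analysis.
Set Implicit Arguments. Unset Strict Implicit. Unset Printing Implicit Defensive.
Import Order.TTheory GRing.Theory Num.Theory numFieldNormedType.Exports.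
Local Open Scope classical_set_scope.
Local Open Scope ring_scope.

Section Arr.
Variable R : realType.

(* Points of R^2 are pairs; a line is a triple (a, b, c) with (a,b) <> (0,0),
   denoting {(x,y) | a x + b y = c}. *)
Definition on_line (l : R * R * R) (p : R * R) : Prop :=
  l.1.1 * p.1 + l.1.2 * p.2 = l.2.

Definition is_line (l : R * R * R) : Prop := l.1.1 != 0 \/ l.1.2 != 0.

(* Bounded position: pairwise intersections are points of R^2 (no two
   lines parallel or equal). *)
Definition bounded_position n (L : 'I_n -> R * R * R) : Prop :=
  forall i j : 'I_n, i != j -> (L i).1.1 * (L j).1.2 - (L j).1.1 * (L i).1.2 != 0.

Definition general_position n (L : 'I_n -> R * R * R) : Prop :=
  forall (i j k : 'I_n) (p : R * R), i != j -> j != k -> i != k ->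
    on_line (L i) p -> on_line (L j) p -> on_line (L k) p -> False.

Definition vertex n (L : 'I_n -> R * R * R) (p : R * R) : Prop :=
  exists i j : 'I_n, i != j /\ on_line (L i) p /\ on_line (L j) p.

Definition seg (p q : R * R) : set (R * R) :=
  [set x | exists t : R, 0 <= t <= 1 /\
     x = (p.1 + t * (q.1 - p.1), p.2 + t * (q.2 - p.2))].

Definition edge_on n (L : 'I_n -> R * R * R) (k : 'I_n) (E : set (R * R)) : Prop :=
  exists p q : R * R, p <> q /\ vertex L p /\ vertex L q /\
    on_line (L k) p /\ on_line (L k) q /\
    (forall r, vertex L r -> seg p q r -> r = p \/ r = q) /\
    E = seg p q.

Definition edge n (L : 'I_n -> R * R * R) (E : set (R * R)) : Prop :=
  exists k, edge_on L k E.

Definition convex_set (A : set (R * R)) : Prop :=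
  forall p q, A p -> A q -> seg p q `<=` A.

Definition boundary (A : set (R * R)) : set (R * R) := closure A `\` A°.

Definition boundary_of_edges n (L : 'I_n -> R * R * R) (V : set (R * R)) : Prop :=
  exists (K : set 'I_n) (E : 'I_n -> set (R * R)),
    (forall k, K k -> edge_on L k (E k)) /\
    boundary V = \bigcup_(k in K) E k.

(* The properties in the definition of an alcove (plus nonempty interior). *)
Definition alcove_like n (L : 'I_n -> R * R * R) (V : set (R * R)) : Prop :=
  [/\ compact V, convex_set V, connected V, V° !=set0 &
      boundary_of_edges L V].

Definition alcove n (L : 'I_n -> R * R * R) (V : set (R * R)) : Prop :=
  alcove_like L V /\
  forall W, W `<=` V -> W <> V -> ~ alcove_like L W.

End Arr.

(* Main.v *)
Require Import Defs.
From HB Require Import structures.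
From mathcomp Require Import all_boot all_order all_algebra.
From mathcomp Require Import all_classical all_reals all_analysis.
From mathcomp Require Import ring lra.
Import Order.TTheory GRing.Theory Num.Theory numFieldNormedType.Exports.
Local Open Scope classical_set_scope.
Local Open Scope ring_scope.
Set Implicit Arguments. Unset Strict Implicit.
Section Basic.
Variable R : realType.
Implicit Types (l : R * R * R) (x y d : R * R).

Definition fv l x : R := l.1.1 * x.1 + l.1.2 * x.2 - l.2.
Definition pt x (t : R) d : R * R := (x.1 + t * d.1, x.2 + t * d.2).
Definition dif y x : R * R := (y.1 - x.1, y.2 - x.2).
Definition slope l d : R := l.1.1 * d.1 + l.1.2 * d.2.

Lemma on_lineE l x : on_line l x <-> fv l x = 0.
Proof. rewrite /on_line /fv; split=> [->|h]; first by rewrite subrr.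
by apply/eqP; rewrite -subr_eq0; apply/eqP. Qed.

Lemma fv_pt l x t d : fv l (pt x t d) = fv l x + t * slope l d.
Proof. rewrite /fv /pt /slope /=; ring. Qed.

Lemma slope_dif l x y : slope l (dif y x) = fv l y - fv l x.
Proof. rewrite /fv /dif /slope /=; ring. Qed.

Lemma segE p q z : seg p q z <-> exists t, 0 <= t <= 1 /\ z = pt p t (dif q p).
Proof. by []. Qed.

Lemma pt0 x d : pt x 0 d = x.
Proof. by case: x => a b; rewrite /pt /= !mul0r !addr0. Qed.

Lemma ptA x t e d : pt (pt x t d) e d = pt x (t + e) d.
Proof. rewrite /pt /=; congr (_, _); ring. Qed.

Lemma pt_dif1 x y : pt x 1 (dif y x) = y.
Proof. case: x y => [a b] [c e]; rewrite /pt /dif /=; congr (_, _); ring. Qed.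

Lemma nbhs_R (x : R) (A : set R) : nbhs x A -> exists e, 0 < e /\ forall t, `|x - t| < e -> A t.
Proof.
move=> /nbhs_ballP [e e0 He]; exists e; split => // t ht; by apply: He.
Qed.

Lemma sq_pos (a b : R) : a != 0 \/ b != 0 -> 0 < a * a + b * b.
Proof.
have ha := sqr_ge0 a; have hb := sqr_ge0 b; rewrite !expr2 in ha hb.
case=> h.
- have : 0 < a * a by rewrite lt_def mulf_neq0 //= mulr_ge0 ?ha.
  lra.
- have : 0 < b * b by rewrite lt_def mulf_neq0 // hb.
  lra.
Qed.

Lemma pt_cont x d : continuous (fun t : R => pt x t d).
Proof.
move=> t; rewrite /pt; apply: (cvg_pair (G := nbhs (x.1 + t * d.1)) (H := nbhs (x.2 + t * d.2))).
- by apply: cvgD; [exact: cvg_cst| apply: cvgM; [exact: cvg_id| exact: cvg_cst]].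
- by apply: cvgD; [exact: cvg_cst| apply: cvgM; [exact: cvg_id| exact: cvg_cst]].
Qed.

Lemma fv_cont l : continuous (fv l).
Proof.
move=> x; apply: cvgB; last exact: cvg_cst.
apply: cvgD; (apply: cvgM; [exact: cvg_cst|]); [exact: cvg_fst|exact: cvg_snd].
Qed.

End Basic.
Section E.
Variable R : realType.

Definition Qe (a b d : R) := 0 <= a + d * b /\ (0 < a -> 0 < a + d * b).

Lemma eps_one (a b : R) : 0 < a \/ (a = 0 /\ 0 <= b) ->
  exists e, 0 < e /\ forall d, 0 < d <= e -> Qe a b d.
Proof.
case=> [ha|[-> hb]].
- have hn := normr_ge0 b; have h1 := ler_norm b; have h2 := ler_norm (- b).
  rewrite normrN in h2.
  exists (a / (`|b| + 1)); split; first by rewrite divr_gt0 // ltr_wpDl.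
  move=> d /andP[d0 de].
  have hde : d * (`|b| + 1) <= a by rewrite -ler_pdivlMr // ltr_wpDl.
  have : 0 <= d * (`|b| + b) by rewrite mulr_ge0 //; lra.
  rewrite /Qe; split; nra.
- exists 1; split => // d /andP[d0 _]; rewrite /Qe add0r; split.
  + by rewrite mulr_ge0 // ltW.
  + by rewrite ltxx.
Qed.

Lemma eps_all (I : finType) (a b : I -> R) :
  (forall i, 0 < a i \/ (a i = 0 /\ 0 <= b i)) ->
  exists e, 0 < e /\ forall i, Qe (a i) (b i) e.
Proof.
move=> H.
have : forall s : seq I, exists e, 0 < e /\ forall i, i \in s -> forall d, 0 < d <= e -> Qe (a i) (b i) d.
  elim=> [|j s [e [e0 He]]]; first by exists 1.
  have [ej [ej0 Hj]] := eps_one (H j).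
  exists (if e < ej then e else ej); split; first by case: ifP.
  move=> i; rewrite inE => /orP[/eqP -> | iS] d /andP[d0 de].
  + apply: Hj; rewrite d0 /=; case: ifP de => // /ltW h1 h2; exact: le_trans h2 h1.
  + apply: He => //; rewrite d0 /=; case: ifP de => // /negbT; rewrite -leNgt => h1 h2.
    exact: le_trans h2 h1.
move=> /(_ (enum I)) [e [e0 He]]; exists e; split => // i.
by apply: He; rewrite ?mem_enum // e0 lexx.
Qed.
End E.

Section Poly.
Variable R : realType.
Variable n : nat.
Variable L : 'I_n -> R * R * R.
Hypothesis Hline : forall i, is_line (L i).
Hypothesis Hbdd : bounded_position L.
Hypothesis Hgen : general_position L.
Variable s : 'I_n -> R.
Hypothesis Hs : forall i, s i != 0.

Definition g i x := s i * fv (L i) x.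
Definition V : set (R * R) := [set x | forall i, 0 <= g i x].
Definition dir i : R * R := (- (L i).1.2, (L i).1.1).

Lemma g_pt i x t d : g i (pt x t d) = g i x + t * (s i * slope (L i) d).
Proof. rewrite /g fv_pt; ring. Qed.

Lemma g0E i x : g i x = 0 <-> fv (L i) x = 0.
Proof. rewrite /g; split => [/eqP|->]; last by rewrite mulr0.
by rewrite mulf_eq0 (negbTE (Hs i)) /= => /eqP. Qed.

Lemma slope_dir_ii i : slope (L i) (dir i) = 0.
Proof. rewrite /slope /dir /=; ring. Qed.

Lemma slope_dir_ij i j : i != j -> slope (L j) (dir i) != 0.
Proof.
move=> /Hbdd; rewrite /slope /dir /=.
have -> : (L j).1.1 * - (L i).1.2 + (L j).1.2 * (L i).1.1 =
  (L i).1.1 * (L j).1.2 - (L j).1.1 * (L i).1.2 by ring.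
done.
Qed.

Lemma g_cont i : continuous (g i).
Proof. move=> x; apply: cvgM; [exact: cvg_cst| exact: fv_cont]. Qed.

Lemma V_closed : closed V.
Proof.
have -> : V = \bigcap_(i in [set: 'I_n]) ((g i) @^-1` [set z | 0 <= z]).
  by apply/seteqP; split => x /= H i; [move=> _; apply: H | apply: H].
apply: closed_bigI => i _; apply: preimage_closed; last exact: closed_ge.
by move=> y _; exact: g_cont.
Qed.

Lemma V_convex : Defs.convex_set V.
Proof.
move=> p q Vp Vq z [t [/andP[t0 t1] ->]] i.
change (0 <= g i (pt p t (dif q p))); rewrite g_pt slope_dif.
have h1 := Vp i; have h2 := Vq i; rewrite /g in h1 h2 *.
have h3 : 0 <= (1 - t) * (s i * fv (L i) p) by rewrite mulr_ge0 // subr_ge0.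
have h4 : 0 <= t * (s i * fv (L i) q) by rewrite mulr_ge0.
have -> : s i * fv (L i) p + t * (s i * (fv (L i) q - fv (L i) p)) =
  (1 - t) * (s i * fv (L i) p) + t * (s i * fv (L i) q) by ring.
by rewrite addr_ge0.
Qed.

Lemma V_connected x0 : V x0 -> connected V.
Proof.
move=> Vx0.
have -> : V = \bigcup_(y in V) seg x0 y.
  apply/seteqP; split => [y Vy|y [z Vz]]; first by exists y => //; exists 1; split; [rewrite lexx ler01 | exact: (esym (pt_dif1 x0 y))].
  exact: V_convex.
apply: bigcup_connected.
  by exists x0 => y _; exists 0; split; [rewrite lexx ler01 | exact: (esym (pt0 x0 (dif y x0)))].
move=> y _.
have -> : seg x0 y = (fun t => pt x0 t (dif y x0)) @` `[0, 1]%classic.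
  apply/seteqP; split => z.
  - by move=> [t [ht ->]]; exists t => //=; rewrite in_itv.
  - by move=> [t /=]; rewrite in_itv /= => ht <-; exists t.
apply: connected_continuous_connected; first exact: segment_connected.
exact/continuous_subspaceT/pt_cont.
Qed.

Lemma notint i x : V x -> g i x = 0 -> ~ V° x.
Proof.
move=> Vx gx0 Vix.
pose nv : R * R := (- (s i * (L i).1.1), - (s i * (L i).1.2)).
have := @pt_cont R x nv 0 V; rewrite pt0 => /(_ Vix) /nbhs_R [e [e0 He]].
have := He (e / 2); rewrite sub0r normrN gtr0_norm ?divr_gt0 // ltr_pdivrMr // ltr_pMr // ltr1n.
move=> /(_ isT) /(_ i); rewrite g_pt gx0 add0r /slope /=.
have hN := sq_pos (Hline i).
have hs : 0 < s i * s i by rewrite lt_def mulf_neq0 ?Hs //= -expr2 sqr_ge0.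
have : 0 < e / 2 by rewrite divr_gt0.
move: hN hs; set a := (L i).1.1; set b := (L i).1.2; set si := s i; set e2 := e / 2.
move=> hN hs he2 h.
have : e2 * (si * (a * - (si * a) + b * - (si * b))) = - (e2 * ((si * si) * (a * a + b * b))) by ring.
move=> eq; rewrite eq oppr_ge0 in h.
have h' : 0 < e2 * (si * si * (a * a + b * b)) by rewrite mulr_gt0 // mulr_gt0.
by move: h; rewrite leNgt h'.
Qed.

Lemma int_pos i x : V° x -> 0 < g i x.
Proof.
move=> Vix; have Vx : V x := interior_subset Vix.
rewrite lt_def Vx andbT; apply/eqP => h; exact: notint Vx h Vix.
Qed.

Lemma pos_int x : (forall i, 0 < g i x) -> V° x.
Proof.
move=> H; rewrite /interior.
have : \forall y \near x, forall i, 0 < g i y.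
  apply: (@filter_forall _ 'I_n (fun i y => 0 < g i y) (nbhs x) _) => i.
  have gc : g i @ x --> g i x by apply: g_cont.
  exact: (@cvgr_gt R _ (nbhs x) _ (g i) (g i x) gc 0 (H i)).
by apply: filterS => y Hy i; apply: ltW.
Qed.

Lemma VboundE x : boundary V x <-> V x /\ exists i, g i x = 0.
Proof.
split.
- move=> [cx nix]; have Vx : V x by rewrite (closure_id V).1 //; exact: V_closed.
  split => //; apply: contrapT => /forallNP H; apply: nix; apply: pos_int => i.
  by rewrite lt_def Vx andbT; apply/eqP; exact: H.
- move=> [Vx [i gi]]; split; first exact: subset_closure.
  exact: notint gi.
Qed.


Lemma ptN (x d : R * R) (t : R) : pt x t (- d.1, - d.2) = pt x (- t) d.
Proof. rewrite /pt /=; congr (_, _); ring. Qed.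

Lemma pt_inj (x d : R * R) (a b : R) : 0 < d.1 * d.1 + d.2 * d.2 -> pt x a d = pt x b d -> a = b.
Proof.
move=> hN [h1 h2].
have e1 : (a - b) * d.1 = 0 by rewrite mulrBl; apply/eqP; rewrite subr_eq0; apply/eqP; apply: (addrI x.1).
have e2 : (a - b) * d.2 = 0 by rewrite mulrBl; apply/eqP; rewrite subr_eq0; apply/eqP; apply: (addrI x.2).
have : (a - b) * (d.1 * d.1 + d.2 * d.2) = 0.
  by rewrite mulrDr !mulrA e1 e2 !mul0r addr0.
move/eqP; rewrite mulf_eq0 (gt_eqF hN) orbF subr_eq0 => /eqP //.
Qed.

Lemma pt_seg (x d : R * R) (a b u : R) : pt (pt x a d) u (dif (pt x b d) (pt x a d)) = pt x (a + u * (b - a)) d.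
Proof. rewrite /pt /dif /=; congr (_, _); ring. Qed.

Lemma line_param i (x0 y : R * R) : fv (L i) x0 = 0 -> fv (L i) y = 0 -> exists tau, y = pt x0 tau (dir i).
Proof.
move=> h0 h1.
have hN := sq_pos (Hline i).
move: h0 h1 hN; rewrite /fv /dir /pt /=.
case: x0 => x1 x2; case: y => y1 y2 /=.
set a := (L i).1.1; set b := (L i).1.2; set c := (L i).2 => h0 h1 hN.
have e : a * (y1 - x1) + b * (y2 - x2) = 0.
  have -> : a * (y1 - x1) + b * (y2 - x2) = (a * y1 + b * y2 - c) - (a * x1 + b * x2 - c) by ring.
  by rewrite h0 h1 subrr.
set N := a * a + b * b; set Z := a * (y2 - x2) - b * (y1 - x1).
have hN0 : N != 0 by rewrite gt_eqF.
have k1 : (y1 - x1) * N = Z * (- b).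
  apply/eqP; rewrite -subr_eq0; apply/eqP.
  have -> : (y1 - x1) * N - Z * - b = a * (a * (y1 - x1) + b * (y2 - x2)) by rewrite /N /Z; ring.
  by rewrite e mulr0.
have k2 : (y2 - x2) * N = Z * a.
  apply/eqP; rewrite -subr_eq0; apply/eqP.
  have -> : (y2 - x2) * N - Z * a = b * (a * (y1 - x1) + b * (y2 - x2)) by rewrite /N /Z; ring.
  by rewrite e mulr0.
exists (Z / N); congr (_, _).
- by rewrite mulrAC -k1 mulfK // addrC subrK.
- by rewrite mulrAC -k2 mulfK // addrC subrK.
Qed.

Section Bnd.
Variable M : R.
Hypothesis HM : forall x, V x -> `|x.1| <= M /\ `|x.2| <= M.

Lemma V_compact : compact V.
Proof.
apply: (subclosed_compact V_closed (compact_setX (@segment_compact R (- M) M) (@segment_compact R (- M) M))).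
move=> x Vx; have [h1 h2] := HM Vx; split => /=; rewrite in_itv /= -ler_norml //.
Qed.

Lemma tbound (x0 d : R * R) (t : R) : V (pt x0 t d) ->
  t * (d.1 * d.1 + d.2 * d.2) <= `|d.1| * (M + `|x0.1|) + `|d.2| * (M + `|x0.2|).
Proof.
move=> Vy; set y := pt x0 t d.
have -> : t * (d.1 * d.1 + d.2 * d.2) = d.1 * (y.1 - x0.1) + d.2 * (y.2 - x0.2) by rewrite /y /pt /=; ring.
have [hy1 hy2] := HM Vy.
apply: lerD.
- apply: le_trans (ler_norm _) _; rewrite normrM; apply: ler_wpM2l => //.
  by apply: le_trans (ler_normB _ _) _; rewrite lerD2r.
- apply: le_trans (ler_norm _) _; rewrite normrM; apply: ler_wpM2l => //.
  by apply: le_trans (ler_normB _ _) _; rewrite lerD2r.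
Qed.

Lemma endpoint i (x0 d : R * R) : V x0 -> fv (L i) x0 = 0 -> slope (L i) d = 0 ->
  0 < d.1 * d.1 + d.2 * d.2 ->
  exists t2, 0 <= t2 /\ (forall t, 0 <= t -> (V (pt x0 t d) <-> t <= t2)) /\
    exists j, j != i /\ fv (L j) (pt x0 t2 d) = 0.
Proof.
move=> Vx0 f0 sl0 hN.
set S := [set t : R | 0 <= t /\ V (pt x0 t d)].
set C := `|d.1| * (M + `|x0.1|) + `|d.2| * (M + `|x0.2|).
have hS : has_sup S.
  split; first by exists 0; split => //; rewrite pt0.
  exists (C / (d.1 * d.1 + d.2 * d.2)) => t [t0 Vt].
  by rewrite ler_pdivlMr //; exact: tbound.
set t2 := sup S.
have ub : forall t, S t -> t <= t2 by move=> t St; exact: sup_upper_bound hS t St.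
have t20 : 0 <= t2 by apply: ub; split => //; rewrite pt0.
have gE : forall j t, g j (pt x0 t d) = g j x0 + t * (s j * slope (L j) d) by move=> j t; rewrite g_pt.
have Vt2 : V (pt x0 t2 d).
  move=> j; rewrite gE; set a := g j x0; set b := s j * slope (L j) d.
  rewrite leNgt; apply/negP => hneg.
  set ep := - (a + t2 * b) / (`|b| + 1).
  have hb1 : 0 < `|b| + 1 by rewrite ltr_wpDl.
  have ep0 : 0 < ep by rewrite divr_gt0 // oppr_gt0.
  have [t [t0 Vt] ht] := sup_adherent ep0 hS.
  have tt2 : t <= t2 by apply: ub.
  have ht' : t2 - ep < t by exact: ht.
  have := Vt j; rewrite gE -/a -/b => hat.
  have hep : ep * (`|b| + 1) = - (a + t2 * b) by rewrite /ep mulfVK // gt_eqF.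
  have n1 := ler_norm b; have n2 := ler_norm (- b); rewrite normrN in n2.
  have k1 : 0 <= (b + `|b|) * (t2 - t) by rewrite mulr_ge0 // ?subr_ge0 //; lra.
  have k2 : 0 <= `|b| * (ep - (t2 - t)) by rewrite mulr_ge0 // subr_ge0; lra.
  nra.
have inS : forall t, 0 <= t <= t2 -> V (pt x0 t d).
  move=> t /andP[t0 tt2] j; rewrite gE.
  have h0 := Vx0 j; have h2 := Vt2 j; rewrite gE in h2.
  have [t2z|t2p] := eqVneq t2 0.
    have -> : t = 0 by apply/eqP; rewrite eq_le t0 andbT -t2z.
    by rewrite mul0r addr0.
  have t2pos : 0 < t2 by rewrite lt_def t2p t20.
  have : 0 <= t2 * (g j x0 + t * (s j * slope (L j) d)).
    have -> : t2 * (g j x0 + t * (s j * slope (L j) d)) =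
      (t2 - t) * g j x0 + t * (g j x0 + t2 * (s j * slope (L j) d)) by ring.
    by rewrite addr_ge0 // mulr_ge0 // subr_ge0.
  by rewrite pmulr_rge0.
exists t2; split => //; split.
  move=> t t0; split => [Vt|tt2]; first by apply: ub.
  by apply: inS; rewrite t0.
apply: contrapT => /forallNP H.
have hyp : forall j, 0 < g j (pt x0 t2 d) \/ (g j (pt x0 t2 d) = 0 /\ 0 <= s j * slope (L j) d).
  move=> j; have [->|ji] := eqVneq j i.
    by right; rewrite sl0 mulr0; split => //; rewrite g0E fv_pt f0 sl0 mulr0 addr0.
  left; rewrite lt_def (Vt2 j) andbT; apply/eqP => /g0E h.
  by apply: (H j); split.
have [e [e0 He]] := @eps_all R _ (fun j => g j (pt x0 t2 d)) (fun j => s j * slope (L j) d) hyp.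
have : S (t2 + e).
  split; first by rewrite addr_ge0 // ltW.
  by move=> j; rewrite -ptA g_pt; exact: (He j).1.
by move/ub => h; lra.
Qed.

End Bnd.

Lemma seg_fv l (p q z : R * R) : on_line l p -> on_line l q -> seg p q z -> fv l z = 0.
Proof.
move=> /on_lineE hp /on_lineE hq [t [_ ->]].
change (fv l (pt p t (dif q p)) = 0); by rewrite fv_pt slope_dif hp hq subrr mulr0 addr0.
Qed.

Lemma second_pt i x : V x -> fv (L i) x = 0 -> exists y, V y /\ y <> x /\ fv (L i) y = 0.
Proof.
move=> Vx fx.
have [sg [sg0 Hsg]] : exists sg : R, sg != 0 /\ forall j, j != i -> fv (L j) x = 0 ->
    0 <= sg * (s j * slope (L j) (dir i)).
  case: (pselect (exists j, j != i /\ fv (L j) x = 0)) => [[j [ji fj]]|nj].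
  - exists (if 0 <= s j * slope (L j) (dir i) then 1 else -1); split.
      by case: ifP => _; rewrite ?oppr_eq0 oner_eq0.
    move=> j' j'i fj'.
    have jj' : j' = j.
      apply: contrapT => njj.
      have h1 : i != j by rewrite eq_sym.
      have h2 : j != j' by apply/eqP => e; apply: njj; rewrite e.
      have h3 : i != j' by rewrite eq_sym.
      have o1 : on_line (L i) x by apply/on_lineE.
      have o2 : on_line (L j) x by apply/on_lineE.
      have o3 : on_line (L j') x by apply/on_lineE.
      exact: (Hgen h1 h2 h3 o1 o2 o3).
    rewrite jj'; case: ifP => [h|/negbT h]; first by rewrite mul1r.
    by rewrite mulN1r oppr_ge0 ltW // ltNge.
  - exists 1; split; first exact: oner_neq0.
    by move=> j ji fj; exfalso; apply: nj; exists j.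
set d : R * R := (sg * (dir i).1, sg * (dir i).2).
have sld : forall j, slope (L j) d = sg * slope (L j) (dir i) by move=> j; rewrite /slope /d /=; ring.
have hyp : forall j, 0 < g j x \/ (g j x = 0 /\ 0 <= s j * slope (L j) d).
  move=> j; have [gz|gnz] := eqVneq (g j x) 0.
  - right; split => //; have [->|ji] := eqVneq j i.
      by rewrite sld slope_dir_ii !mulr0.
    rewrite sld mulrCA; apply: Hsg => //; exact/g0E.
  - by left; rewrite lt_def gnz (Vx j).
have [e [e0 He]] := @eps_all R _ (fun j => g j x) (fun j => s j * slope (L j) d) hyp.
exists (pt x e d); split; first by move=> j; rewrite g_pt; exact: (He j).1.
split; last by rewrite fv_pt fx sld slope_dir_ii !mulr0 addr0.
move=> h.
have : pt x e d = pt x 0 d by rewrite pt0.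
have hN : 0 < d.1 * d.1 + d.2 * d.2.
  have := sq_pos (Hline i); rewrite /d /dir /=.
  have hs2 : 0 < sg * sg by rewrite lt_def mulf_neq0 //= -expr2 sqr_ge0.
  move=> h2; have := mulr_gt0 hs2 h2.
  by have -> : sg * - (L i).1.2 * (sg * - (L i).1.2) + sg * (L i).1.1 * (sg * (L i).1.1) =
    sg * sg * ((L i).1.1 * (L i).1.1 + (L i).1.2 * (L i).1.2) by ring.
move/(pt_inj hN) => e00; by move: e0; rewrite e00 ltxx.
Qed.

Section Bnd2.
Variable M : R.
Hypothesis HM : forall x, V x -> `|x.1| <= M /\ `|x.2| <= M.

Lemma edge_E i x y : V x -> V y -> x <> y -> fv (L i) x = 0 -> fv (L i) y = 0 ->
  edge_on L i [set z | V z /\ fv (L i) z = 0].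
Proof.
move=> Vx Vy xy fx fy.
set d := dir i.
have hN : 0 < d.1 * d.1 + d.2 * d.2.
  by have := sq_pos (Hline i); rewrite /d /dir /= mulrNN addrC.
have [t2 [t20 [H2 [j2 [j2i f2]]]]] := endpoint HM Vx fx (slope_dir_ii i) hN.
have hN' : 0 < (- d.1) * (- d.1) + (- d.2) * (- d.2).
  by rewrite (mulrNN d.1) (mulrNN d.2).
have sl' : slope (L i) (- d.1, - d.2) = 0.
  have -> : slope (L i) (- d.1, - d.2) = - slope (L i) d by rewrite /slope /=; ring.
  by rewrite slope_dir_ii oppr0.
have [t1 [t10 [H1 [j1 [j1i f1]]]]] := endpoint (d:=(- d.1, - d.2)) HM Vx fx sl' hN'.
rewrite ptN in f1.
have C : forall tau, V (pt x tau d) <-> - t1 <= tau <= t2.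
  move=> tau; case: (leP 0 tau) => htau.
  - rewrite (H2 _ htau); split => [h|/andP[_ //]].
    by apply/andP; split => //; lra.
  - have := H1 (- tau); rewrite ptN opprK => -> ; last by lra.
    split => [h|/andP[h _]]; last by lra.
    by apply/andP; split; lra.
have [tau ytau] := line_param fx fy.
have tau0 : tau != 0 by apply/eqP => h; apply: xy; rewrite ytau h pt0.
have /C /andP[ta1 ta2] : V (pt x tau d) by rewrite -ytau.
have t12 : 0 < t1 + t2.
  move: tau0; rewrite neq_lt => /orP[h|h]; lra.
set P := pt x (- t1) d; set Q := pt x t2 d.
have VP : V P by apply/C; apply/andP; split; lra.
have VQ : V Q by apply/C; apply/andP; split; lra.
have fP : fv (L i) P = 0 by rewrite fv_pt fx slope_dir_ii mulr0 addr0.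
have fQ : fv (L i) Q = 0 by rewrite fv_pt fx slope_dir_ii mulr0 addr0.
exists P, Q; split.
  by move/(pt_inj hN) => h; move: t12; rewrite -h subrr ltxx.
split; first by exists j1, i; split; [exact: j1i| split; apply/on_lineE].
split; first by exists j2, i; split; [exact: j2i| split; apply/on_lineE].
split; first exact/on_lineE.
split; first exact/on_lineE.
split.
  move=> r [i1 [i2 [i12 [on1 on2]]]] [u [/andP[u0 u1] er]].
  have [j [ji fj]] : exists j, j != i /\ fv (L j) r = 0.
    have [e1|e1] := eqVneq i1 i.
      by exists i2; split; [rewrite -e1 eq_sym | exact/on_lineE/on2].
    by exists i1; split; [ | exact/on_lineE/on1].
  have er' : r = pt P u (dif Q P) by exact: er.
  have [uz|un0] := eqVneq u 0; first by left; rewrite er' uz pt0.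
  have [uo|un1] := eqVneq u 1; first by right; rewrite er' uo pt_dif1.
  exfalso.
  have u0' : 0 < u by rewrite lt_def un0 u0.
  have u1' : 0 < 1 - u by rewrite subr_gt0 lt_def eq_sym un1 u1.
  move: fj; rewrite er' pt_seg -g0E g_pt.
  have := VP j; have := VQ j; rewrite /P /Q !g_pt.
  set a := g j x; set b := s j * slope (L j) d.
  have bn0 : b != 0 by rewrite mulf_neq0 ?Hs // slope_dir_ij // eq_sym.
  move=> hQ hP h0.
  have idt : a + (- t1 + u * (t2 - - t1)) * b = (1 - u) * (a + - t1 * b) + u * (a + t2 * b) by ring.
  rewrite idt in h0.
  have k1 : 0 <= (1 - u) * (a + - t1 * b) by rewrite mulr_ge0 // ltW.
  have k2 : 0 <= u * (a + t2 * b) by rewrite mulr_ge0 // ltW.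
  have z1 : (1 - u) * (a + - t1 * b) = 0 by lra.
  have z2 : u * (a + t2 * b) = 0 by lra.
  move/eqP: z1; rewrite mulf_eq0 (gt_eqF u1') /= => /eqP z1.
  move/eqP: z2; rewrite mulf_eq0 (gt_eqF u0') /= => /eqP z2.
  have : b * (t1 + t2) = 0.
    have -> : b * (t1 + t2) = (a + t2 * b) - (a + - t1 * b) by ring.
    by rewrite z1 z2 subrr.
  by move/eqP; rewrite mulf_eq0 (negbTE bn0) (gt_eqF t12).
apply/seteqP; split => z.
- move=> [Vz fz]; have [tz ez] := line_param fx fz.
  have /C /andP[tz1 tz2] : V (pt x tz d) by rewrite -ez.
  exists ((tz + t1) / (t1 + t2)); split.
    apply/andP; split; first by rewrite divr_ge0 //; lra.
    by rewrite ler_pdivrMr // mul1r; lra.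
  change (z = pt P ((tz + t1) / (t1 + t2)) (dif Q P)).
  rewrite pt_seg ez; congr (pt x _ d).
  have -> : t2 - - t1 = t1 + t2 by ring.
  rewrite divfK ?gt_eqF //; ring.
- move=> [u [/andP[u0 u1] ez]].
  have ez' : z = pt P u (dif Q P) by exact: ez.
  rewrite ez' pt_seg; split; last by rewrite fv_pt fx slope_dir_ii mulr0 addr0.
  apply/C; apply/andP; split; nra.
Qed.

End Bnd2.

Section Bnd3.
Variable M : R.
Hypothesis HM : forall x, V x -> `|x.1| <= M /\ `|x.2| <= M.

Lemma V_boe : boundary_of_edges L V.
Proof.
exists [set i | exists x y, V x /\ V y /\ x <> y /\ fv (L i) x = 0 /\ fv (L i) y = 0].
exists (fun i => [set z | V z /\ fv (L i) z = 0]).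
split.
  move=> i [x [y [Vx [Vy [xy [fx fy]]]]]]; have := edge_E HM Vx Vy xy fx fy. done.
apply/seteqP; split => x.
- move/VboundE => [Vx [i /g0E gi]].
  have [y [Vy [yx fy]]] := second_pt Vx gi.
  exists i => //; exists x, y; do 3 (split => //); by move=> h; apply: yx.
- move=> [i _ [Vx fx]]; apply/VboundE; split => //; exists i; exact/g0E.
Qed.

Lemma V_min W : W `<=` V -> W <> V -> ~ alcove_like L W.
Proof.
move=> WV WnV [cW _ _ [w Ww] [K [E [HE bE]]]].
have clW : closed W := compact_closed (@norm_hausdorff _ _) cW.
have [x [Vx nWx]] : exists x, V x /\ ~ W x.
  apply: contrapT => H; apply: WnV; apply/seteqP; split => // z Vz.
  by apply: contrapT => nWz; apply: H; exists z.
have wW : W w := interior_subset Ww.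
set phi := fun l : R => pt w l (dif x w).
set S := [set l : R | 0 <= l <= 1 /\ W (phi l)].
have hS : has_sup S.
  split; first by exists 0; split; [rewrite lexx ler01 | rewrite /phi pt0].
  by exists 1 => l [/andP[_ ?] _].
set ls := sup S.
have ub : forall l, S l -> l <= ls by move=> l Sl; exact: sup_upper_bound hS l Sl.
have ls0 : 0 <= ls by apply: ub; split; [rewrite lexx ler01 | rewrite /phi pt0].
have ls1 : ls <= 1 by apply: ge_sup; [case: hS | move=> l [/andP[_ ?] _]].
have cont : forall B, nbhs (phi ls) B -> exists e, 0 < e /\ forall l, `|ls - l| < e -> B (phi l).
  move=> B hB; have := @pt_cont R w (dif x w) ls B hB.
  by move/nbhs_R => [e [e0 He]]; exists e; split.
have Wy : W (phi ls).
  apply: clW => B hB.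
  have [e [e0 He]] := cont B hB.
  have [l [l01 Wl] hl] := sup_adherent e0 hS.
  have hl' : ls - e < l by exact: hl.
  have lls : l <= ls by apply: ub.
  exists (phi l); split => //; apply: He.
  by rewrite ger0_norm ?subr_ge0 //; lra.
have ls1' : ls < 1.
  rewrite lt_def ls1 andbT; apply/eqP => h.
  by apply: nWx; move: Wy; rewrite /phi -h pt_dif1.
have nint : ~ W° (phi ls).
  move=> hI; have [e [e0 He]] := cont W hI.
  set del := if e < 1 - ls then e else 1 - ls.
  have del0 : 0 < del by rewrite /del; case: ifP => _ //; rewrite subr_gt0.
  have dele : del <= e by rewrite /del; case: ifP => [_|/negbT]; [exact: lexx| rewrite -leNgt].
  have del1 : del <= 1 - ls by rewrite /del; case: ifP => [/ltW|_] //.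
  have : S (ls + del / 2).
    split.
      apply/andP; split; first by rewrite addr_ge0 // divr_ge0 // ltW.
      have : del / 2 < del by rewrite ltr_pdivrMr // ltr_pMr // ltr1n.
      lra.
    apply: He; rewrite opprD addrA subrr sub0r normrN ger0_norm ?divr_ge0 ?ltW //.
    have : del / 2 < del by rewrite ltr_pdivrMr // ltr_pMr // ltr1n.
    lra.
  move/ub; have : 0 < del / 2 by rewrite divr_gt0.
  lra.
have bW : boundary W (phi ls) by split; [exact: subset_closure | exact: nint].
rewrite bE in bW; case: bW => k Kk Eky.
have [p [q [_ [_ [_ [pk [qk [_ Ek]]]]]]]] := HE k Kk.
rewrite Ek in Eky.
have fk := seg_fv pk qk Eky.
have gw : 0 < g k w by apply: int_pos; exact: (interiorS WV).
have gx := Vx k.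
move: fk; rewrite -g0E /phi g_pt slope_dif.
have -> : g k w + ls * (s k * (fv (L k) x - fv (L k) w)) = (1 - ls) * g k w + ls * g k x.
  by rewrite /g; ring.
have h1 : 0 < (1 - ls) * g k w by rewrite mulr_gt0 // subr_gt0.
have h2 : 0 <= ls * g k x by rewrite mulr_ge0.
move=> h; clear -h h1 h2; lra.
Qed.

Lemma V_alcove : V° !=set0 -> alcove L V.
Proof.
move=> [x0 hx0]; split.
  split; [exact: V_compact HM | exact: V_convex | exact: (V_connected (interior_subset hx0)) |
          by exists x0 | exact: V_boe].
by move=> W WV WnV; exact: V_min.
Qed.

End Bnd3.
End Poly.

Section Main.
Variable R : realType.

Lemma aff0 (A B C : R) (p q r : R * R) :
  (q.1 - p.1) * (r.2 - p.2) - (r.1 - p.1) * (q.2 - p.2) != 0 ->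
  A * p.1 + B * p.2 + C = 0 -> A * q.1 + B * q.2 + C = 0 -> A * r.1 + B * r.2 + C = 0 ->
  forall x : R * R, A * x.1 + B * x.2 + C = 0.
Proof.
set D := _ - _ => D0 hp hq hr x.
have hA : A * D = 0.
  have -> : A * D = (r.2 - p.2) * ((A * q.1 + B * q.2 + C) - (A * p.1 + B * p.2 + C))
     - (q.2 - p.2) * ((A * r.1 + B * r.2 + C) - (A * p.1 + B * p.2 + C)) by rewrite /D; ring.
  by rewrite hp hq hr subrr !mulr0 subrr.
have hB : B * D = 0.
  have -> : B * D = (q.1 - p.1) * ((A * r.1 + B * r.2 + C) - (A * p.1 + B * p.2 + C))
     - (r.1 - p.1) * ((A * q.1 + B * q.2 + C) - (A * p.1 + B * p.2 + C)) by rewrite /D; ring.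
  by rewrite hp hq hr subrr !mulr0 subrr.
move/eqP: hA; rewrite mulf_eq0 (negbTE D0) orbF => /eqP A0.
move/eqP: hB; rewrite mulf_eq0 (negbTE D0) orbF => /eqP B0.
by move: hp; rewrite A0 B0 !mul0r !add0r => ->.
Qed.

Lemma aff_comb (l1 l2 l3 : R * R * R) (c1 c2 c3 e1 e2 e0 : R) (p q r : R * R) :
  let u := fun x : R * R => c1 * fv l1 x + c2 * fv l2 x + c3 * fv l3 x + e1 * x.1 + e2 * x.2 + e0 in
  (q.1 - p.1) * (r.2 - p.2) - (r.1 - p.1) * (q.2 - p.2) != 0 ->
  u p = 0 -> u q = 0 -> u r = 0 -> forall x, u x = 0.
Proof.
move=> u D0.
set A := c1 * l1.1.1 + c2 * l2.1.1 + c3 * l3.1.1 + e1.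
set B := c1 * l1.1.2 + c2 * l2.1.2 + c3 * l3.1.2 + e2.
set C := - (c1 * l1.2 + c2 * l2.2 + c3 * l3.2) + e0.
have uE : forall x, u x = A * x.1 + B * x.2 + C by move=> x; rewrite /u /A /B /C /fv; ring.
rewrite !uE => hp hq hr x; rewrite uE; exact: aff0 D0 hp hq hr x.
Qed.

Lemma conv_bnd (l1 l2 l3 v1 v2 v3 z : R) : 0 <= l1 -> 0 <= l2 -> 0 <= l3 -> l1 + l2 + l3 = 1 ->
  z = l1 * v1 + l2 * v2 + l3 * v3 -> `|z| <= `|v1| + `|v2| + `|v3|.
Proof.
move=> h1 h2 h3 hs ->.
have a1 := ler_norm v1; have a2 := ler_norm v2; have a3 := ler_norm v3.
have b1 := ler_norm (- v1); have b2 := ler_norm (- v2); have b3 := ler_norm (- v3).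
rewrite !normrN in b1 b2 b3.
have n1 := normr_ge0 v1; have n2 := normr_ge0 v2; have n3 := normr_ge0 v3.
have k1 : l1 <= 1 by lra. have k2 : l2 <= 1 by lra. have k3 : l3 <= 1 by lra.
have p1 : 0 <= l1 * (`|v1| - v1) by rewrite mulr_ge0 // subr_ge0.
have p2 : 0 <= l2 * (`|v2| - v2) by rewrite mulr_ge0 // subr_ge0.
have p3 : 0 <= l3 * (`|v3| - v3) by rewrite mulr_ge0 // subr_ge0.
have q1 : 0 <= l1 * (`|v1| + v1) by rewrite mulr_ge0 //; lra.
have q2 : 0 <= l2 * (`|v2| + v2) by rewrite mulr_ge0 //; lra.
have q3 : 0 <= l3 * (`|v3| + v3) by rewrite mulr_ge0 //; lra.
have r1 : 0 <= (1 - l1) * `|v1| by rewrite mulr_ge0 // subr_ge0.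
have r2 : 0 <= (1 - l2) * `|v2| by rewrite mulr_ge0 // subr_ge0.
have r3 : 0 <= (1 - l3) * `|v3| by rewrite mulr_ge0 // subr_ge0.
rewrite ler_norml; apply/andP; split; nra.
Qed.

Lemma dif_pos (p q : R * R) : p <> q -> 0 < (dif q p).1 * (dif q p).1 + (dif q p).2 * (dif q p).2.
Proof.
move=> pq; apply: sq_pos; rewrite /dif /=.
case: (eqVneq (q.1 - p.1) 0) => h1; last by left.
case: (eqVneq (q.2 - p.2) 0) => h2; last by right.
exfalso; apply: pq; case: p q h1 h2 => [p1 p2] [q1 q2] /= /eqP h1 /eqP h2.
move: h1 h2; rewrite !subr_eq0 => /eqP -> /eqP -> //.
Qed.

Lemma sgn_pos (z : R) : z != 0 -> 0 < (if 0 < z then 1 else -1) * z.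
Proof.
move=> z0; case: ifP => [h|/negbT h]; first by rewrite mul1r.
by rewrite mulN1r oppr_gt0 lt_def eq_sym z0 /= leNgt.
Qed.

Lemma sgn_neq0 (z : R) : (if 0 < z then 1 else -1) != 0 :> R.
Proof. by case: ifP => _; rewrite ?oppr_eq0 oner_eq0. Qed.

Variable n : nat.
Variable L : 'I_n -> R * R * R.
Hypothesis Hline : forall i, is_line (L i).
Hypothesis Hbdd : bounded_position L.
Hypothesis Hgen : general_position L.

Lemma inter_uniq i j (x y : R * R) : i != j -> fv (L i) x = 0 -> fv (L j) x = 0 ->
  fv (L i) y = 0 -> fv (L j) y = 0 -> x = y.
Proof.
move=> /Hbdd D0 hix hjx hiy hjy.
move: D0 hix hjx hiy hjy; rewrite /fv.
case: x => x1 x2; case: y => y1 y2 /=.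
set ai := (L i).1.1; set bi := (L i).1.2; set ci := (L i).2.
set aj := (L j).1.1; set bj := (L j).1.2; set cj := (L j).2.
move=> D0 h1 h2 h3 h4.
have e1 : ai * (x1 - y1) + bi * (x2 - y2) = 0.
  have -> : ai * (x1 - y1) + bi * (x2 - y2) = (ai * x1 + bi * x2 - ci) - (ai * y1 + bi * y2 - ci) by ring.
  by rewrite h1 h3 subrr.
have e2 : aj * (x1 - y1) + bj * (x2 - y2) = 0.
  have -> : aj * (x1 - y1) + bj * (x2 - y2) = (aj * x1 + bj * x2 - cj) - (aj * y1 + bj * y2 - cj) by ring.
  by rewrite h2 h4 subrr.
have u0 : (ai * bj - aj * bi) * (x1 - y1) = 0.
  have -> : (ai * bj - aj * bi) * (x1 - y1) = bj * (ai * (x1 - y1) + bi * (x2 - y2)) - bi * (aj * (x1 - y1) + bj * (x2 - y2)) by ring.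
  by rewrite e1 e2 !mulr0 subrr.
have v0 : (ai * bj - aj * bi) * (x2 - y2) = 0.
  have -> : (ai * bj - aj * bi) * (x2 - y2) = ai * (aj * (x1 - y1) + bj * (x2 - y2)) - aj * (ai * (x1 - y1) + bi * (x2 - y2)) by ring.
  by rewrite e1 e2 !mulr0 subrr.
move/eqP: u0; rewrite mulf_eq0 (negbTE D0) /= subr_eq0 => /eqP ->.
move/eqP: v0; rewrite mulf_eq0 (negbTE D0) /= subr_eq0 => /eqP -> //.
Qed.

Lemma vertex_other k (p : R * R) : vertex L p -> fv (L k) p = 0 -> exists a, a != k /\ fv (L a) p = 0.
Proof.
move=> [i [j [ij [oi oj]]]] _.
have [ik|ik] := eqVneq i k.
  by exists j; split; [rewrite -ik eq_sym | exact/on_lineE].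
by exists i; split; [ | exact/on_lineE].
Qed.


Lemma main_thm (E : set (R * R)) (HE : edge L E) :
  exists W : set (R * R), alcove L W /\ E `<=` boundary W.
Proof.
case: HE => k [p [q [pq [vp [vq [pk [qk [nb ->]]]]]]]].
have fpk : fv (L k) p = 0 by apply/on_lineE.
have fqk : fv (L k) q = 0 by apply/on_lineE.
have [a [ak fpa]] := vertex_other vp fpk.
have [b [bk fqb]] := vertex_other vq fqk.
have ka : k != a by rewrite eq_sym.
have ab : a != b.
  apply/eqP => e; apply: pq; apply: (inter_uniq ka fpk fpa fqk); by rewrite e.
have D0 : (L a).1.1 * (L b).1.2 - (L b).1.1 * (L a).1.2 != 0 := Hbdd ab.
have [r [fra frb]] : exists r : R * R, fv (L a) r = 0 /\ fv (L b) r = 0.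
  exists (((L a).2 * (L b).1.2 - (L b).2 * (L a).1.2) / ((L a).1.1 * (L b).1.2 - (L b).1.1 * (L a).1.2),
   ((L a).1.1 * (L b).2 - (L b).1.1 * (L a).2) / ((L a).1.1 * (L b).1.2 - (L b).1.1 * (L a).1.2)).
  by split; rewrite /fv /=; field.
have frk : fv (L k) r != 0.
  apply/eqP => h.
  have o1 : on_line (L a) r by apply/on_lineE.
  have o2 : on_line (L b) r by apply/on_lineE.
  have o3 : on_line (L k) r by apply/on_lineE.
  exact: (Hgen ab bk ak o1 o2 o3).
pose m := pt p (1/2) (dif q p).
have hdp := dif_pos pq.
have h12 : 0 < 1 / 2 :> R by rewrite divr_gt0.
have h12' : 1 / 2 < 1 :> R by rewrite ltr_pdivrMr // mul1r ltr1n.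
have hmk : fv (L k) m = 0 by rewrite /m fv_pt slope_dif fpk fqk subrr mulr0 addr0.
have hmi : forall i, i != k -> fv (L i) m != 0.
  move=> i ik; apply/eqP => h.
  have vm : vertex L m by exists i, k; split => //; split; apply/on_lineE.
  have sm : seg p q m by exists (1/2); split => //; rewrite (ltW h12) (ltW h12').
  case: (nb m vm sm) => e.
  - have e' : pt p (1/2) (dif q p) = pt p 0 (dif q p) by rewrite pt0.
    by move: (pt_inj hdp e') h12 => ->; rewrite ltxx.
  - have e' : pt p (1/2) (dif q p) = pt p 1 (dif q p) by rewrite pt_dif1.
    by move: (pt_inj hdp e') h12' => ->; rewrite ltxx.
pose sg := fun z : R => if 0 < z then 1 else -1 : R.
pose s := fun i => if i == k then sg (fv (L k) r) else sg (fv (L i) m).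
have Hs : forall i, s i != 0 by move=> i; rewrite /s; case: ifP => _; exact: sgn_neq0.
have gm : forall i, i != k -> 0 < g L s i m.
  by move=> i ik; rewrite /g /s (negbTE ik); exact: sgn_pos (hmi i ik).
have gr : 0 < g L s k r by rewrite /g /s eqxx; exact: sgn_pos frk.
have EV : seg p q `<=` V L s.
  move=> x hx i; have [ik|ik] := eqVneq i k.
    by rewrite ik /g (seg_fv pk qk hx) mulr0 lexx.
  case: hx => t [/andP[tz tl] ex].
  have ex' : x = pt p t (dif q p) by exact: ex.
  rewrite ex' g_pt.
  have := gm i ik; rewrite /m g_pt.
  set al := g L s i p; set be := s i * slope (L i) (dif q p) => hm.
  rewrite leNgt; apply/negP => hneg.
  have b0 : be != 0.
    apply/eqP => b0; move: hm hneg; rewrite b0 !mulr0 !addr0 => h1 h2.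
    by move: (lt_trans h1 h2); rewrite ltxx.
  pose t0 := - al / be.
  have t0b : t0 * be = - al by rewrite /t0 divfK.
  have ht0 : 0 < t0 /\ t0 < 1.
    have k1 : 0 < (t0 - t) * be by rewrite mulrBl t0b; lra.
    have k2 : 0 < (1 / 2 - t0) * be by rewrite mulrBl t0b; lra.
    move: b0; rewrite neq_lt => /orP[bn|bp].
    - have k1' : t0 < t by nra.
      have k2' : 1 / 2 < t0 by nra.
      split; lra.
    - have k1' : t < t0 by nra.
      have k2' : t0 < 1 / 2 by nra.
      split; lra.
  case: ht0 => t00 t01.
  pose v := pt p t0 (dif q p).
  have fvi : fv (L i) v = 0.
    apply/(g0E L Hs); rewrite /v g_pt -/al -/be t0b; by rewrite subrr.
  have fvk : fv (L k) v = 0 by rewrite /v fv_pt slope_dif fpk fqk subrr mulr0 addr0.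
  have vv : vertex L v by exists i, k; split => //; split; apply/on_lineE.
  have sv : seg p q v by exists t0; split => //; rewrite (ltW t00) (ltW t01).
  case: (nb v vv sv) => e.
  - have e' : pt p t0 (dif q p) = pt p 0 (dif q p) by rewrite pt0.
    by move: (pt_inj hdp e') t00 => ->; rewrite ltxx.
  - have e' : pt p t0 (dif q p) = pt p 1 (dif q p) by rewrite pt_dif1.
    by move: (pt_inj hdp e') t01 => ->; rewrite ltxx.
have gq : 0 < g L s a q.
  have := gm a ak; rewrite /m g_pt slope_dif fpa subr0.
  have -> : g L s a p = 0 by rewrite /g fpa mulr0.
  by rewrite add0r pmulr_rgt0 // => h; exact: h.
have gp : 0 < g L s b p.
  have := gm b bk; rewrite /m g_pt slope_dif fqb sub0r.
  have -> : g L s b p + 1 / 2 * (s b * - fv (L b) p) = 1 / 2 * g L s b p by rewrite /g; field.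
  by rewrite pmulr_rgt0 // => h; exact: h.
have Dpqr : (q.1 - p.1) * (r.2 - p.2) - (r.1 - p.1) * (q.2 - p.2) != 0.
  apply/eqP => DD.
  have Aq : (L k).1.1 * (q.1 - p.1) + (L k).1.2 * (q.2 - p.2) = 0.
    have := slope_dif (L k) p q; rewrite fqk fpk subrr; by [].
  have Ar : (L k).1.1 * (r.1 - p.1) + (L k).1.2 * (r.2 - p.2) = fv (L k) r.
    by have := slope_dif (L k) p r; rewrite fpk subr0.
  have i1 : (q.1 - p.1) * fv (L k) r = 0.
    rewrite -Ar.
    have -> : (q.1 - p.1) * ((L k).1.1 * (r.1 - p.1) + (L k).1.2 * (r.2 - p.2)) =
      (r.1 - p.1) * ((L k).1.1 * (q.1 - p.1) + (L k).1.2 * (q.2 - p.2)) +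
      (L k).1.2 * ((q.1 - p.1) * (r.2 - p.2) - (r.1 - p.1) * (q.2 - p.2)) by ring.
    by rewrite Aq DD !mulr0 addr0.
  have i2 : (q.2 - p.2) * fv (L k) r = 0.
    rewrite -Ar.
    have -> : (q.2 - p.2) * ((L k).1.1 * (r.1 - p.1) + (L k).1.2 * (r.2 - p.2)) =
      (r.2 - p.2) * ((L k).1.1 * (q.1 - p.1) + (L k).1.2 * (q.2 - p.2)) -
      (L k).1.1 * ((q.1 - p.1) * (r.2 - p.2) - (r.1 - p.1) * (q.2 - p.2)) by ring.
    by rewrite Aq DD !mulr0 subr0.
  move/eqP: i1; rewrite mulf_eq0 (negbTE frk) orbF => /eqP i1.
  move/eqP: i2; rewrite mulf_eq0 (negbTE frk) orbF => /eqP i2.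
  by move: hdp; rewrite /dif /= i1 i2 !mul0r addr0 ltxx.
pose ck := s k / g L s k r; pose ca := s a / g L s a q; pose cb := s b / g L s b p.
have ckr : ck * fv (L k) r = 1 by rewrite /ck mulrAC divff // gt_eqF.
have caq : ca * fv (L a) q = 1 by rewrite /ca mulrAC divff // gt_eqF.
have cbp : cb * fv (L b) p = 1 by rewrite /cb mulrAC divff // gt_eqF.
have lam : forall x, ck * fv (L k) x + ca * fv (L a) x + cb * fv (L b) x = 1.
  move=> x; apply/eqP; rewrite -subr_eq0; apply/eqP.
  have := @aff_comb (L k) (L a) (L b) ck ca cb 0 0 (-1) p q r Dpqr.
  move=> /(_ _ _ _ x) /=; rewrite !mul0r !addr0 => -> //.
  - by rewrite fpk fpa cbp !mulr0 !add0r subrr.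
  - by rewrite fqk fqb caq !mulr0 add0r addr0 subrr.
  - by rewrite fra frb ckr !mulr0 !addr0 subrr.
have co1 : forall x : R * R, x.1 = cb * fv (L b) x * p.1 + ca * fv (L a) x * q.1 + ck * fv (L k) x * r.1.
  move=> x; apply/eqP; rewrite eq_sym -subr_eq0; apply/eqP.
  have := @aff_comb (L b) (L a) (L k) (cb * p.1) (ca * q.1) (ck * r.1) (-1) 0 0 p q r Dpqr.
  have e : forall x, cb * p.1 * fv (L b) x + ca * q.1 * fv (L a) x + ck * r.1 * fv (L k) x + -1 * x.1 + 0 * x.2 + 0 =
     cb * fv (L b) x * p.1 + ca * fv (L a) x * q.1 + ck * fv (L k) x * r.1 - x.1 by move=> y; ring.
  move=> H; rewrite -e; apply: H; rewrite /= e.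
  - by rewrite fpk fpa cbp !mulr0 !mul0r !addr0 mul1r subrr.
  - by rewrite fqk fqb caq !mulr0 !mul0r add0r addr0 mul1r subrr.
  - by rewrite fra frb ckr !mulr0 !mul0r !add0r mul1r subrr.
have co2 : forall x : R * R, x.2 = cb * fv (L b) x * p.2 + ca * fv (L a) x * q.2 + ck * fv (L k) x * r.2.
  move=> x; apply/eqP; rewrite eq_sym -subr_eq0; apply/eqP.
  have := @aff_comb (L b) (L a) (L k) (cb * p.2) (ca * q.2) (ck * r.2) 0 (-1) 0 p q r Dpqr.
  have e : forall x, cb * p.2 * fv (L b) x + ca * q.2 * fv (L a) x + ck * r.2 * fv (L k) x + 0 * x.1 + -1 * x.2 + 0 =
     cb * fv (L b) x * p.2 + ca * fv (L a) x * q.2 + ck * fv (L k) x * r.2 - x.2 by move=> y; ring.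
  move=> H; rewrite -e; apply: H; rewrite /= e.
  - by rewrite fpk fpa cbp !mulr0 !mul0r !addr0 mul1r subrr.
  - by rewrite fqk fqb caq !mulr0 !mul0r add0r addr0 mul1r subrr.
  - by rewrite fra frb ckr !mulr0 !mul0r !add0r mul1r subrr.
pose M := (`|p.1| + `|q.1| + `|r.1|) + (`|p.2| + `|q.2| + `|r.2|).
have HM : forall x, V L s x -> `|x.1| <= M /\ `|x.2| <= M.
  move=> x Vx.
  have l1 : 0 <= cb * fv (L b) x by rewrite /cb mulrAC; exact: divr_ge0 (Vx b) (ltW gp).
  have l2 : 0 <= ca * fv (L a) x by rewrite /ca mulrAC; exact: divr_ge0 (Vx a) (ltW gq).
  have l3 : 0 <= ck * fv (L k) x by rewrite /ck mulrAC; exact: divr_ge0 (Vx k) (ltW gr).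
  have ls : cb * fv (L b) x + ca * fv (L a) x + ck * fv (L k) x = 1.
    by rewrite -(lam x); ring.
  have b1 := conv_bnd l1 l2 l3 ls (co1 x).
  have b2 := conv_bnd l1 l2 l3 ls (co2 x).
  have n1 : 0 <= `|p.1| + `|q.1| + `|r.1| by rewrite !addr_ge0.
  have n2 : 0 <= `|p.2| + `|q.2| + `|r.2| by rewrite !addr_ge0.
  rewrite /M; split; lra.
have Vint : (V L s)° !=set0.
  pose al := fun i => if i == k then 1 else g L s i m.
  pose be := fun i => if i == k then 0 else g L s i r - g L s i m.
  have hyp : forall i, 0 < al i \/ (al i = 0 /\ 0 <= be i).
    by move=> i; left; rewrite /al; case: ifP => [_|/negbT ik]; [exact: ltr01 | exact: gm].
  have [e [e0 He]] := eps_all hyp.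
  exists (pt m e (dif r m)); apply: pos_int => i.
  rewrite g_pt slope_dif mulrBr -/(g L s i r) -/(g L s i m).
  have [ik|ik] := eqVneq i k.
    by rewrite ik /g hmk mulr0 subr0 add0r mulr_gt0.
  have := (He i).2; rewrite /al /be (negbTE ik); apply; exact: gm.
exists (V L s); split; first exact: (V_alcove Hline Hbdd Hgen Hs HM Vint).
move=> x hx; apply/(VboundE Hline Hs); split; first exact: EV.
by exists k; rewrite /g (seg_fv pk qk hx) mulr0.
Qed.

End Main.

Unset Implicit Arguments.
Unset Strict Implicit.

Theorem lemma1p9 (R : realType) (n : nat) (L : 'I_n -> R * R * R)
  (Hline : forall i, is_line (L i))
  (Hbdd : bounded_position L) (Hgen : general_position L)
  (E : set (R * R)) (HE : edge L E) :
  exists V : set (R * R), alcove L V /\ E `<=` boundary V.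
Proof. exact: (main_thm Hline Hbdd Hgen HE). Qed.
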